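(* For any quiver $G$, the explosion $X(G)$ equipped with the covering map $p_G : X(G)\to G$ is the epi-projective cover of $G$; that is, $X(G)$ is epi-projective and $p_G$ is an epi-coessential epimorphism.
   Context: A quiver is a quadruple $(V,E,\sigma,\tau)$ with $V,E$ sets and $\sigma,\tau : E \to V$ functions (source and target). A quiver homomorphism is a pair of functions on vertices and edges commuting with sources and targets; $\mathbf{Quiv}$ is the category of quivers, composition componentwise. A homomorphism is epic iff its vertex and edge maps are surjective. A quiver $P$ is epi-projective if for every epic $\phi : A\to B$ and every $\psi : P\to B$ there is $\gamma : P\to A$ with $\phi\circ\gamma=\psi$. An epic $\phi : G\to H$ is epi-coessential if for every homomorphism $\alpha : A\to G$, $\phi\circ\alpha$ epic implies $\alpha$ epic. An epi-projective cover of $G$ is an epi-projective quiver $P$ with an epi-coessential homomorphism $P\to G$. A vertex $v$ is independent if no edge has $v$ as source or target; $\mathrm{indep}(G)$ is the set of independent vertices. For a set $S$, $I(S)$ is the quiver with vertex set $S$ and no edges; $M(T)$ has vertex set $\{0,1\}\times T$, edge set $T$, source $t\mapsto(0,t)$, target $t\mapsto(1,t)$. The explosion is $X(G):=I(\mathrm{indep}(G))\amalg M(E(G))$ (disjoint union of quivers). The covering map $p_G : X(G)\to G$ is the unique homomorphism which on $I(\mathrm{indep}(G))$ sends each independent vertex $v$ to $v$, and on $M(E(G))$ is the identity on edges and sends $(0,e)\mapsto\sigma_G(e)$, $(1,e)\mapsto\tau_G(e)$. *)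

(* Defs.v *)
Set Implicit Arguments.

Record quiver := Quiver {
  qV : Type;
  qE : Type;
  qsrc : qE -> qV;
  qtgt : qE -> qV }.

Record qhom (G H : quiver) := QHom {
  hV : qV G -> qV H;
  hE : qE G -> qE H;
  hsrc : forall e, hV (qsrc G e) = qsrc H (hE e);
  htgt : forall e, hV (qtgt G e) = qtgt H (hE e) }.

Definition qcomp (A B C : quiver) (f : qhom B C) (g : qhom A B) : qhom A C.
Proof.
  refine (@QHom A C (fun v => hV f (hV g v)) (fun e => hE f (hE g e)) _ _).
  - intro e. rewrite (hsrc g), (hsrc f). reflexivity.
  - intro e. rewrite (htgt g), (htgt f). reflexivity.
Defined.

Definition qhom_eq (A B : quiver) (f g : qhom A B) : Prop :=
  (forall v, hV f v = hV g v) /\ (forall e, hE f e = hE g e).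

Definition epic (A B : quiver) (f : qhom A B) : Prop :=
  (forall w, exists v, hV f v = w) /\ (forall d, exists e, hE f e = d).

Definition epi_projective (P : quiver) : Prop :=
  forall (A B : quiver) (phi : qhom A B), epic phi ->
  forall psi : qhom P B, exists gamma : qhom P A, qhom_eq (qcomp phi gamma) psi.

Definition epi_coessential (G H : quiver) (phi : qhom G H) : Prop :=
  epic phi /\
  forall (A : quiver) (alpha : qhom A G), epic (qcomp phi alpha) -> epic alpha.

Definition epi_projective_cover (P G : quiver) (p : qhom P G) : Prop :=
  epi_projective P /\ epi_coessential p.

Definition independent (G : quiver) (v : qV G) : Prop :=
  forall e, qsrc G e <> v /\ qtgt G e <> v.

Definition indep (G : quiver) : Type := { v : qV G | independent G v }.

Definition Iq (S : Type) : quiver := @Quiver S Empty_set (fun e => match e with end)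
                                                         (fun e => match e with end).

(* M(T): vertices {0,1} x T (0 = false, 1 = true), edges T *)
Definition Mq (T : Type) : quiver := @Quiver (bool * T) T (fun t => (false, t)) (fun t => (true, t)).

Definition qsum (A B : quiver) : quiver :=
  @Quiver (qV A + qV B)%type (qE A + qE B)%type
    (fun e => match e with inl a => inl (qsrc A a) | inr b => inr (qsrc B b) end)
    (fun e => match e with inl a => inl (qtgt A a) | inr b => inr (qtgt B b) end).

Definition explosion (G : quiver) : quiver := qsum (Iq (indep G)) (Mq (qE G)).

Definition pG_V (G : quiver) (x : qV (explosion G)) : qV G :=
  match x with
  | inl v => proj1_sig v
  | inr (b, e) => if b then qtgt G e else qsrc G e
  end.

Definition pG_E (G : quiver) (x : qE (explosion G)) : qE G :=
  match x with
  | inl z => match z with end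
  | inr e => e
  end.

Definition covering_map (G : quiver) : qhom (explosion G) G.
Proof.
  refine (@QHom (explosion G) G (@pG_V G) (@pG_E G) _ _).
  - intros [z|e]; [destruct z | reflexivity].
  - intros [z|e]; [destruct z | reflexivity].
Defined.

(* Main.v *)
Require Import Defs.
From Stdlib Require Import Classical ClassicalEpsilon ProofIrrelevance.

Section S.
Variables (G A B : quiver) (phi : qhom A B) (Hphi : epic phi)
          (psi : qhom (explosion G) B).

Definition preV (w : qV B) : qV A :=
  proj1_sig (constructive_indefinite_description _ (proj1 Hphi w)).
Definition preE (d : qE B) : qE A :=
  proj1_sig (constructive_indefinite_description _ (proj2 Hphi d)).
Lemma preV_spec w : hV phi (preV w) = w.
Proof. unfold preV; destruct constructive_indefinite_description; auto. Qed.
Lemma preE_spec d : hE phi (preE d) = d.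
Proof. unfold preE; destruct constructive_indefinite_description; auto. Qed.

Definition gV (x : qV (explosion G)) : qV A :=
  match x with
  | inl v => preV (hV psi (inl v))
  | inr (b, e) => if b then qtgt A (preE (hE psi (inr e)))
                  else qsrc A (preE (hE psi (inr e)))
  end.
Definition gE (x : qE (explosion G)) : qE A :=
  match x with
  | inl z => match z with end
  | inr e => preE (hE psi (inr e))
  end.
Definition gam : qhom (explosion G) A.
Proof.
  refine (@QHom _ _ gV gE _ _).
  - intros [z|e]; [destruct z | reflexivity].
  - intros [z|e]; [destruct z | reflexivity].
Defined.
End S.

Theorem mainTheorem8 (G : quiver) :
  epi_projective_cover (covering_map G).
Proof.
  split.
  - intros A B phi Hphi psi. exists (@gam G A B phi Hphi psi). split.
    + intros [v|[[|] e]]; simpl.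
      * apply preV_spec.
      * rewrite (htgt phi), preE_spec. exact (eq_sym (htgt psi (inr e))).
      * rewrite (hsrc phi), preE_spec. exact (eq_sym (hsrc psi (inr e))).
    + intros [z|e]; [destruct z|]. simpl. apply preE_spec.
  - split.
    + split.
      * intro w. destruct (classic (independent G w)) as [Hi|Hn].
        -- exists (inl (exist _ w Hi)). reflexivity.
        -- apply not_all_ex_not in Hn. destruct Hn as [e He].
           destruct (classic (qsrc G e = w)) as [Hs|Hs].
           ++ exists (inr (false, e)). exact Hs.
           ++ destruct (classic (qtgt G e = w)) as [Ht|Ht].
              ** exists (inr (true, e)). exact Ht.
              ** exfalso; tauto.
      * intro d. exists (inr d). reflexivity.
    + intros A alpha [HV HE].
      assert (HEd : forall e, exists a, hE alpha a = inr e).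
      { intro e. destruct (HE e) as [a Ha]. exists a. simpl in Ha.
        destruct (hE alpha a) as [z|e0]; [destruct z|]. simpl in Ha. subst; reflexivity. }
      split.
      * intros [v|[[|] e]].
        -- destruct (HV (proj1_sig v)) as [a Ha]. exists a. simpl in Ha.
           destruct (hV alpha a) as [v'|[b e]].
           ++ simpl in Ha. f_equal. destruct v, v'; simpl in *. subst.
              f_equal. apply proof_irrelevance.
           ++ exfalso. destruct v as [v Hv]. simpl in Ha. destruct (Hv e).
              destruct b; auto.
        -- destruct (HEd e) as [a Ha]. exists (qtgt A a). rewrite htgt, Ha. reflexivity.
        -- destruct (HEd e) as [a Ha]. exists (qsrc A a). rewrite hsrc, Ha. reflexivity.
      * intros [z|e]; [destruct z|]. apply HEd.
Qed.
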